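(* Let $g\in C(\mathbb{R},\mathbb{R})$ and $\mathcal{G}=\{g\}$. Then $\mathcal{K}_\mathcal{G}=\{\mathrm{CL}(E):E\in\mathrm{CL}(\mathbb{R})\}$ and $\mathcal{L}_\mathcal{G}=\{[g\restriction E]:E\in\mathrm{CL}(\mathbb{R})\}$, where $[g\restriction E]=\{f\in C(\mathbb{R},\mathbb{R}):f\restriction E=g\restriction E\}$.
   Context: For a closed set $E\subseteq\mathbb{R}$, $\mathrm{CL}(E)$ denotes the family of all closed subsets of $E$; $C(\mathbb{R},\mathbb{R})$ is the set of continuous functions $\mathbb{R}\to\mathbb{R}$. For $\mathcal{G}\subseteq C(\mathbb{R},\mathbb{R})$ let $R_\mathcal{G}=\{(f,E)\in C(\mathbb{R},\mathbb{R})\times\mathrm{CL}(\mathbb{R}):(\exists g\in\mathcal{G})\, f\restriction E=g\restriction E\}$. For $\mathcal{F}\subseteq C(\mathbb{R},\mathbb{R})$ and $\mathcal{E}\subseteq\mathrm{CL}(\mathbb{R})$ put $E_\mathcal{G}(\mathcal{F})=\{E\in\mathrm{CL}(\mathbb{R}):(\forall f\in\mathcal{F})\,(f,E)\in R_\mathcal{G}\}$ and $F_\mathcal{G}(\mathcal{E})=\{f\in C(\mathbb{R},\mathbb{R}):(\forall E\in\mathcal{E})\,(f,E)\in R_\mathcal{G}\}$. Let $\mathcal{K}_\mathcal{G}=\{E_\mathcal{G}(\mathcal{F}):\mathcal{F}\subseteq C(\mathbb{R},\mathbb{R})\}$ and $\mathcal{L}_\mathcal{G}=\{F_\mathcal{G}(\mathcal{E}):\mathcal{E}\subseteq\mathrm{CL}(\mathbb{R})\}$.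 *)

(* Defs.v *)
From mathcomp Require Import all_boot all_order all_algebra.
From mathcomp Require Import all_classical all_reals topology normedtype.
Set Implicit Arguments. Unset Strict Implicit. Unset Printing Implicit Defensive.
Import Order.TTheory GRing.Theory Num.Theory.
Local Open Scope classical_set_scope.
Local Open Scope ring_scope.

Section Defs.
Variable R : realType.

Definition Cfun : set (R -> R) := [set f : R -> R | continuous (f : R^o -> R^o)].

Definition CL (E : set R) : set (set R) := [set A : set R | closed (A : set R^o) /\ A `<=` E].

Definition RG (G : set (R -> R)) : set ((R -> R) * set R) :=
  [set p | Cfun p.1 /\ CL setT p.2 /\
           exists2 g, G g & forall x, p.2 x -> p.1 x = g x].

Definition EG (G : set (R -> R)) (F : set (R -> R)) : set (set R) :=
  [set E | CL setT E /\ forall f, F f -> RG G (f, E)].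

Definition FG (G : set (R -> R)) (Es : set (set R)) : set (R -> R) :=
  [set f | Cfun f /\ forall E, Es E -> RG G (f, E)].

Definition KG (G : set (R -> R)) : set (set (set R)) :=
  [set X | exists2 F, F `<=` Cfun & X = EG G F].
Definition LG (G : set (R -> R)) : set (set (R -> R)) :=
  [set X | exists2 Es, Es `<=` CL setT & X = FG G Es].

Definition restr_class (g : R -> R) (E : set R) : set (R -> R) :=
  [set f | Cfun f /\ forall x, E x -> f x = g x].

End Defs.

(* Main.v *)
Require Import Defs.
From mathcomp Require Import all_boot all_order all_algebra.
From mathcomp Require Import all_classical all_reals topology normedtype.
Import Order.TTheory GRing.Theory Num.Theory.
Local Open Scope classical_set_scope.
Local Open Scope ring_scope.

Lemma cont_h (R : realType) (x r : R) :
  Cfun (fun y : R => (r - `|x - y|) + `|r - `|x - y| |).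
Proof.
rewrite /Cfun /=.
have c0 : continuous (fun y : R^o => (x - y : R^o)).
  move=> y; apply: continuousB; [exact: cst_continuous | exact: cvg_id].
have cn : continuous (fun y : R^o => (`|y| : R^o)) by exact: norm_continuous.
have c1 : continuous (fun y : R^o => (r - `|x - y| : R^o)).
  move=> y; apply: continuousB; first exact: cst_continuous.
  exact: (continuous_comp (c0 y) (cn _)).
move=> y; apply: continuousD; first exact: c1.
exact: (continuous_comp (c1 y) (cn _)).
Qed.

Lemma closed_fg {R : realType} (f g : R -> R) : Cfun f -> Cfun g ->
  closed [set x : R^o | f x = g x].
Proof.
move=> cf cg.
have -> : [set x : R^o | f x = g x] = (fun x : R^o => f x - g x) @^-1` [set 0 : R^o].
  by apply/seteqP; split => y /=; [move->; rewrite subrr | move/eqP; rewrite subr_eq0 => /eqP].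
have /continuous_closedP : continuous (fun x : R^o => (f x - g x : R^o)).
  by move=> y; apply: continuousB; [exact: cf | exact: cg].
apply; exact: closed_eq.
Qed.

Lemma bump {R : realType} {E : set R} {x : R} : closed (E : set R^o) -> ~ E x ->
  exists h : R -> R, Cfun h /\ (forall y, E y -> h y = 0) /\ h x != 0.
Proof.
move=> cE nEx.
have : nbhs (x : R^o) (~` E) by move: (closed_openC cE); rewrite openE; apply.
move=> /nbhs_ballP[r r0 hr].
exists (fun y : R => (r - `|x - y|) + `|r - `|x - y| |); split; first exact: cont_h.
split.
  move=> y Ey.
  have : ~ ball (x : R^o) r y by move=> /hr; apply.
  rewrite -ball_normE /ball_ /= => /negP; rewrite -leNgt => ry.
  by rewrite [X in _ + X]ler0_norm ?subr_le0 // addrN.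
rewrite subrr normr0 subr0 gtr0_norm // -mulr2n.
by rewrite mulrn_eq0 /= gt_eqF.
Qed.

Lemma EG_eq (R : realType) (g : R -> R) (F : set (R -> R)) : F `<=` Cfun (R:=R) ->
  EG [set g] F = CL (\bigcap_(f in F) [set x | f x = g x]).
Proof.
move=> FC; apply/seteqP; split => E.
  move=> [[cE _] H]; split => // x Ex f Ff.
  by have [_ [_ [g' ->]]] := H f Ff; apply.
move=> [cE hsub]; split; first by [].
move=> f Ff; split; first exact: FC.
split; first by [].
by exists g => // x Ex; exact: hsub x Ex f Ff.
Qed.

Lemma FG_eq (R : realType) (g : R -> R) (Es : set (set R)) : Cfun g -> Es `<=` CL setT ->
  FG [set g] Es = restr_class g (closure (\bigcup_(E in Es) E : set R^o)).
Proof.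
move=> cg EC; apply/seteqP; split => f.
  move=> [cf H]; split => // x.
  have : closure (\bigcup_(E in Es) E : set R^o) `<=` [set x : R^o | f x = g x].
    have e := proj1 (closure_id _) (closed_fg _ _ cf cg : closed [set x : R^o | f x = g x]).
    rewrite [X in _ `<=` X]e.
    apply: closureS => y [E EsE Ey].
    by have [_ [_ [g' ->]]] := H E EsE; apply.
  by apply.
move=> [cf H]; split => // E EsE; split => //; split; first exact: EC.
exists g => // x Ex; apply: H; apply: subset_closure; by exists E.
Qed.

Theorem theorem3p1 (R : realType) (g : R -> R) :
  Cfun g ->
  KG [set g] = [set CL E | E in CL (@setT R)] /\
  LG [set g] = [set restr_class g E | E in CL (@setT R)].
Proof.
move=> cg; split; apply/seteqP; split => X.
- move=> [F FC ->]; rewrite EG_eq //.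
  exists (\bigcap_(f in F) [set x | f x = g x]) => //; split => //.
  by apply: closed_bigI => f Ff; apply: closed_fg => //; exact: FC.
- move=> [E [cE _] <-].
  exists (restr_class g E); first by move=> f [].
  rewrite EG_eq; last by move=> f [].
  congr CL; apply/seteqP; split => x.
    by move=> Ex f [_ Hf]; exact: Hf.
  move=> Hx; apply: contrapT => nEx.
    have [h [ch [h0 hx]]] := bump cE nEx.
    have : (fun y => g y + h y) x = g x.
      apply: (Hx (fun y => g y + h y)); split.
        by move=> y; apply: continuousD; [exact: cg | exact: ch].
      by move=> y Ey; rewrite h0 // addr0.
    by move/eqP; rewrite /= -subr_eq0 addrC addKr (negbTE hx).
- move=> [Es EC ->]; rewrite FG_eq //.
  by exists (closure (\bigcup_(E in Es) E : set R^o)) => //; split => //; exact: closed_closure.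
- move=> [E [cE _] <-].
  exists [set E]; first by move=> _ ->.
  rewrite FG_eq //; last by move=> _ ->.
  by rewrite bigcup_set1 -(proj1 (closure_id _) cE).
Qed.
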